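(* Let $R\subseteq\mathbb N$ be a congruence-periodic sparse predicate, $d\in\mathbb N^+$, $\tilde R\subseteq^dR$, $n\ge2$, $\mathbf A=(A_1,\dots,A_n)$ an $n$-tuple of operators all $\neq_R0$, and $\Delta\in d\mathbb N$ sufficiently large. Let $a\in\mathbb Z$ satisfy $a>\inf\mathbf A\cdot\tilde R^n_\Delta$ and $a\le\max\{\mathbf A\cdot z:z\in\tilde R^n_\Delta,\ z_1=P^1_\Delta(a;\mathbf A,\tilde R)\}$. Then $$P_\Delta\big(a-A_1P^1_\Delta(a;\mathbf A,\tilde R);\ \mathbf A_{>1},\tilde R\big)=P^{>1}_\Delta(a;\mathbf A,\tilde R),$$ where $\mathbf A_{>1}=(A_2,\dots,A_n)$, $A_1P^1_\Delta(\cdot)$ denotes the operator $A_1$ applied to the element $P^1_\Delta(\cdot)\in\tilde R$, and $P^{>1}_\Delta(a;\mathbf A,\tilde R)$ denotes the tuple of coordinates $2,\dots,n$ of $P_\Delta(a;\mathbf A,\tilde R)$.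
   Context: Let $R\subseteq\mathbb N$ be infinite, enumerated increasingly as $(r_n)$; $\sigma:R\to R$ is the successor map, $\sigma^k$ its iterate. An operator on $R$ is $z\mapsto\sum_{i=0}^ma_i\sigma^i(z)$, $a_i\in\mathbb Z$. $A=_R0$: $Az=0$ for all $z\in R$; $A>_R0$ (resp. $<_R0$): $Az>0$ (resp. $<0$) for cofinitely many $z$. $R$ sparse: every operator satisfies (S1) $A=_R0$ or $A>_R0$ or $A<_R0$; (S2) if $A>_R0$ there is $\Delta$ with $A(\sigma^\Delta z)>z$ for all $z$. Congruence-periodic: $(r_n\bmod m)$ eventually periodic for each $m\ge1$. $\tilde R\subseteq^dR$: $\tilde R=\{r_{N+dt}:t\in\mathbb N\}$ for some $N$. For an $m$-tuple of operators $\mathbf C$, $\mathbf C\cdot z=\sum C_iz_i$, $\mathbf C\cdot S=\{\mathbf C\cdot z:z\in S\}$. $\tilde R^m_\Delta=\{z\in\tilde R^m:z_i\ge\sigma^\Delta z_{i+1}\ (1\le i\le m)\}$, $z_{m+1}:=\min\tilde R$. For an $m$-tuple $\mathbf C$ with entries $\neq_R0$ and $\Delta$ large enough that $z\mapsto\mathbf C\cdot z$ is injective on $R^m_\Delta$, $P_\Delta(x;\mathbf C,\tilde R)$ is the $z\in\tilde R^m_\Delta$ with largest $\mathbf C\cdot z$ subject to $\mathbf C\cdot z<x$ if $x>\inf\mathbf C\cdot\tilde R^m_\Delta$, and otherwise the $z\in\tilde R^m_\Delta$ minimising $\mathbf C\cdot z$; $P^i_\Delta$ is its $i$-th coordinate.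 ''$\Delta$ sufficiently large'' means $\Delta\ge\Delta_0$ for some suitable $\Delta_0$. *)

(* Defs.v *)
From mathcomp Require Import all_boot all_order all_algebra.
Set Implicit Arguments. Unset Strict Implicit. Unset Printing Implicit Defensive.
Import Order.TTheory GRing.Theory Num.Theory.
Local Open Scope ring_scope.

(* The infinite set R ⊆ ℕ is given by its increasing enumeration r : nat -> nat
   (R = range r).  An element z ∈ R is handled through its index k (z = r k),
   so that σ^i (r k) = r (k + i). *)

Definition strictly_incr (r : nat -> nat) : Prop :=
  forall i j : nat, (i < j)%N -> (r i < r j)%N.

(* operator  z ↦ Σ_i a_i σ^i(z), with coefficients A = [:: a_0; ...; a_m],
   applied to the element z = r k of R *)
Definition opapp (r : nat -> nat) (A : seq int) (k : nat) : int :=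
  \sum_(i < size A) A`_i * ((r (k + i)%N)%:Z).

Definition zeroR (r : nat -> nat) (A : seq int) : Prop :=
  forall k, opapp r A k = 0.
Definition posR (r : nat -> nat) (A : seq int) : Prop :=
  exists K : nat, forall k, (K <= k)%N -> 0 < opapp r A k.
Definition negR (r : nat -> nat) (A : seq int) : Prop :=
  exists K : nat, forall k, (K <= k)%N -> opapp r A k < 0.

Definition sparse (r : nat -> nat) : Prop :=
  forall A : seq int,
    (zeroR r A \/ posR r A \/ negR r A) /\
    (posR r A -> exists D : nat, forall k, ((r k)%:Z < opapp r A (k + D)%N)).

Definition congr_periodic (r : nat -> nat) : Prop :=
  forall m : nat, (0 < m)%N ->
    exists p N0 : nat, (0 < p)%N /\
      forall j, (N0 <= j)%N -> (r (j + p) %% m = r j %% m)%N.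

(* R~ = { r_(N + d t) : t ∈ ℕ } ; index k belongs to R~ *)
Definition inTilde (N d k : nat) : Prop := exists t : nat, k = (N + d * t)%N.

(* z ∈ R~^m_Δ, z given by indices k 1, ..., k m (1-based), z_i = r (k i);
   z_(m+1) := min R~ = r N *)
Definition inRtDelta (r : nat -> nat) (N d Delta m : nat) (k : nat -> nat) : Prop :=
  forall i : nat, (1 <= i <= m)%N ->
    inTilde N d (k i) /\
    (r ((if i == m then N else k i.+1) + Delta)%N <= r (k i))%N.

Definition dotop (r : nat -> nat) (m : nat) (C : nat -> seq int) (k : nat -> nat) : int :=
  \sum_(1 <= i < m.+1) opapp r (C i) (k i).

(* IsP r N d Delta m x C k  :<->  (indices of) z = P_Delta(x; C, R~) *)
Definition IsP (r : nat -> nat) (N d Delta m : nat) (x : int) (C : nat -> seq int)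
    (k : nat -> nat) : Prop :=
  inRtDelta r N d Delta m k /\
  ((exists w, inRtDelta r N d Delta m w /\ dotop r m C w < x) ->
     dotop r m C k < x /\
     forall w, inRtDelta r N d Delta m w -> dotop r m C w < x ->
       dotop r m C w <= dotop r m C k) /\
  (~ (exists w, inRtDelta r N d Delta m w /\ dotop r m C w < x) ->
     forall w, inRtDelta r N d Delta m w -> dotop r m C k <= dotop r m C w).

(* Main.v *)
Require Import Defs.
Set Warnings "-notation-overridden,-ambiguous-paths".
From mathcomp Require Import all_boot all_order all_algebra zify.
Import Order.TTheory GRing.Theory Num.Theory.
Local Open Scope ring_scope.


Section S.
Variable r : nat -> nat.
Hypothesis hr : strictly_incr r.

Lemma r_mono i j : (i <= j)%N -> (r i <= r j)%N.
Proof.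
rewrite leq_eqVlt => /orP[/eqP->//|h]. by apply: ltnW; apply: hr.
Qed.

Lemma opappE L M k : (size L <= M)%N ->
  opapp r L k = \sum_(i < M) L`_i * (r (k + i)%N)%:Z.
Proof.
move=> hM; rewrite /opapp (big_ord_widen M (fun i => L`_i * (r (k + i)%N)%:Z)) //.
rewrite big_mkcond; apply: eq_bigr => i _; case: ifP => // /negbT.
by rewrite -leqNgt => h; rewrite nth_default // mul0r.
Qed.

Definition isop (f : nat -> int) := exists L, forall k, f k = opapp r L k.

Lemma isop_add f g : isop f -> isop g -> isop (fun k => f k + g k).
Proof.
move=> [L1 h1] [L2 h2].
set M := maxn (size L1) (size L2).
exists (mkseq (fun i => L1`_i + L2`_i) M) => k.
rewrite h1 h2 (opappE L1 M) ?leq_maxl // (opappE L2 M) ?leq_maxr //.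
rewrite (opappE _ M) ?size_mkseq // -big_split /=; apply: eq_bigr => i _.
by rewrite nth_mkseq ?ltn_ord // mulrDl.
Qed.

Lemma isop_opp f : isop f -> isop (fun k => - f k).
Proof.
move=> [L h]; exists (map (fun x => - x) L) => k.
rewrite h /opapp size_map -sumrN; apply: eq_bigr => i _.
by rewrite (nth_map 0) ?ltn_ord // mulNr.
Qed.

Lemma isop_shift f : isop f -> isop (fun k => f k.+1).
Proof.
move=> [L h]; exists (0 :: L) => k.
rewrite h /opapp /= big_ord_recl /= mul0r add0r; apply: eq_bigr => i _.
by rewrite /bump /= add1n addnS addSn.
Qed.

Lemma isop_r : isop (fun k => (r k.+1)%:Z - (r k)%:Z).
Proof.
exists [:: -1; 1] => k. rewrite /opapp /= !big_ord_recl big_ord0 /=.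
rewrite /bump /= addn0 addn1. lia.
Qed.

Hypothesis hsp : sparse r.

Lemma isop_S1 f : isop f -> (forall k, f k = 0) \/
  (exists K, forall k, (K <= k)%N -> 0 < f k) \/
  (exists K, forall k, (K <= k)%N -> f k < 0).
Proof.
move=> [L h]; have [[z|[[K p]|[K q]]] _] := hsp L.
- by left=> k; rewrite h z.
- by right; left; exists K => k hk; rewrite h p.
- by right; right; exists K => k hk; rewrite h q.
Qed.

Lemma isop_S2 f : isop f -> (exists K, forall k, (K <= k)%N -> 0 < f k) ->
  exists D, forall k, (r k)%:Z < f (k + D)%N.
Proof.
move=> [L h] [K p]; have [_ /(_ _)] := hsp L.
case. by exists K => k hk; rewrite -h p.
by move=> D hD; exists D => k; rewrite h.
Qed.


Lemma r_ge k : (k <= r k)%N.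
Proof. elim: k => // k ih; exact: leq_ltn_trans ih (hr _ _ (ltnSn k)). Qed.

Lemma growth : exists j0, forall z, (2 * r z <= r (z + j0))%N.
Proof.
have [] := isop_S2 _ isop_r; first by exists 0%N => k _; have := hr _ _ (ltnSn k); lia.
move=> D hD; exists D.+1 => z; have := hD z; have := r_mono _ _ (leq_addr D z).
rewrite addnS; lia.
Qed.

Lemma powgrowth j0 : (forall z, (2 * r z <= r (z + j0))%N) ->
  forall t z, (2 ^ t * r z <= r (z + t * j0))%N.
Proof.
move=> h; elim=> [|t ih] z; first by rewrite expn0 mul1n mul0n addn0.
have e : (z + t.+1 * j0 = z + t * j0 + j0)%N by lia.
rewrite e expnS -mulnA; apply: leq_trans (h _); by rewrite leq_mul2l ih.
Qed.

Lemma diff_pos f : isop f -> (exists K, forall k, (K <= k)%N -> 0 < f k) ->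
  exists K, forall k, (K <= k)%N -> 0 < f k.+1 - f k.
Proof.
move=> hf hp; have [D hD] := isop_S2 _ hf hp.
have hg : isop (fun k => f k.+1 - f k) by apply: isop_add; [apply: isop_shift|apply: isop_opp].
case: (isop_S1 _ hg) => [z|[//|[K q]]].
- have c : forall k, f k = f 0%N.
    elim=> // k ih; have := z k; rewrite -ih; lia.
  have := hD `|f 0%N|%N; rewrite c; have := r_ge `|f 0%N|%N. lia.
- have c : forall e, f (K + e)%N <= f K.
    elim=> [|e ih]; first by rewrite addn0.
    have := q (K + e)%N (leq_addr _ _); rewrite addnS; lia.
  have := hD (`|f K|%N + K)%N.
  have -> : (`|f K| + K + D = K + (D + `|f K|))%N by lia.
  have := c (D + `|f K|)%N. have := r_ge (`|f K| + K)%N. lia.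
Qed.

Definition normL (L : seq int) : nat := (\sum_(i < size L) absz (nth 0%R L i))%N.

Lemma opapp_bound L k :
  `|opapp r L k| <= (normL L * r (k + size L)%N)%N%:Z.
Proof.
rewrite /opapp /normL; apply: le_trans (ler_norm_sum _ _ _) _.
rewrite big_distrl /=. rewrite -natz natr_sum; apply: ler_sum => i _.
rewrite normrM natrM natz abszE natz ler_wpM2l // ger0_norm // lez_nat.
apply: r_mono; rewrite leq_add2l; exact: ltnW (ltn_ord i).
Qed.


Lemma r_inv a b : (r a <= r b)%N -> (a <= b)%N.
Proof. move=> h; rewrite leqNgt; apply/negP => /hr; lia. Qed.

Section Tup.
Variables (N d Delta m : nat) (w : nat -> nat).
Hypothesis hw : inRtDelta r N d Delta m w.

Lemma tup_step i : (1 <= i)%N -> (i < m)%N -> (w i.+1 + Delta <= w i)%N.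
Proof.
move=> h1 h2; have [_] := hw i (introT andP (conj h1 (ltnW h2))).
by rewrite (ltn_eqF h2) => /r_inv.
Qed.

Lemma tup_last : (1 <= m)%N -> (N + Delta <= w m)%N.
Proof. move=> h; have [_] := hw m (introT andP (conj h (leqnn m))). by rewrite eqxx => /r_inv. Qed.

Lemma tup_chain j : (2 <= j)%N -> (j <= m)%N -> (w j + Delta <= w 1)%N.
Proof.
elim: j => // j ih h2 hm.
have s := tup_step j ltac:(lia) hm.
case: (ltngtP 1 j) => [h|h|e].
- have := ih h (ltnW hm); lia.
- lia.
- by rewrite -e in s *.
Qed.

Lemma tup_lower j : (1 <= j)%N -> (j <= m)%N -> (N + Delta <= w j)%N.
Proof.
move=> h1 h2.
have gen : forall e, (e < m)%N -> (N + Delta <= w (m - e))%N.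
  elim=> [|e ih] he; first by rewrite subn0; apply: tup_last; lia.
  have := ih (ltnW he); have := tup_step (m - e.+1) ltac:(lia) ltac:(lia).
  have -> : ((m - e.+1).+1 = m - e)%N by lia. lia.
have := gen (m - j)%N ltac:(lia). have -> : (m - (m - j) = j)%N by lia. done.
Qed.

End Tup.

Lemma le_sum_ord (F : nat -> nat) m i : (i <= m)%N -> (F i <= \sum_(j < m.+1) F j)%N.
Proof.
move=> h; rewrite (bigD1 (Ordinal (h : (i < m.+1)%N))) //= leq_addr //.
Qed.

Lemma posz_mulrn (a k : nat) : (a%:Z) *+ k = (a * k)%N%:Z.
Proof. elim: k => [|k ih]; first by rewrite mulr0n muln0. rewrite mulrS ih. lia. Qed.

Lemma dominance (C : nat -> seq int) (m : nat) : (1 <= m)%N ->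
  (exists K, forall k, (K <= k)%N -> 0 < opapp r (C 1%N) k) ->
  exists Delta0, forall Delta, (Delta0 <= Delta)%N -> forall N d u v,
    inRtDelta r N d Delta m u -> inRtDelta r N d Delta m v -> (v 1 < u 1)%N ->
    dotop r m C v < dotop r m C u.
Proof.
move=> hm hpos.
set f := fun k => opapp r (C 1%N) k.
have hf : isop f by exists (C 1%N).
have [K1 hK1] := diff_pos f hf hpos.
have hg : isop (fun k => f k.+1 - f k) by apply: isop_add; [apply: isop_shift|apply: isop_opp].
have [D1 hD1] := isop_S2 _ hg (ex_intro _ K1 hK1).
have [j0 hj0] := growth.
have pg := powgrowth j0 hj0.
set Ls := (\sum_(i < m.+1) size (C i))%N.
set Ms := (\sum_(i < m.+1) normL (C i))%N.
set t := (2 * m * Ms)%N.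
exists (D1 + t * j0 + Ls + 1)%N => Delta hDelta N d u v hu hv huv.
have Tb : forall w, inRtDelta r N d Delta m w ->
   `|\sum_(2 <= i < m.+1) opapp r (C i) (w i)| <= (m * (Ms * r (w 1%N - Delta + Ls)%N))%N%:Z.
  move=> w hw; apply: le_trans (ler_norm_sum _ _ _) _.
  apply: (@le_trans _ _ (\sum_(2 <= i < m.+1) (Ms * r (w 1%N - Delta + Ls)%N)%N%:Z)).
    rewrite big_nat_cond [X in _ <= X]big_nat_cond; apply: ler_sum => i /andP[/andP[h1 h2] _].
    apply: le_trans (opapp_bound _ _) _; rewrite lez_nat; apply: leq_mul.
      exact: (le_sum_ord (fun j => normL (C j)) m i ltac:(lia)).
    apply: r_mono; have := tup_chain _ _ _ _ _ hw i h1 ltac:(lia).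
    have := le_sum_ord (fun i => size (C i)) m i ltac:(lia); rewrite -/Ls /=; lia.
  rewrite sumr_const_nat posz_mulrn lez_nat mulnC; apply: leq_mul => //; lia.
have hu1 := tup_lower _ _ _ _ _ hu 1 (leqnn 1) hm.
have hv1 := tup_lower _ _ _ _ _ hv 1 (leqnn 1) hm.
set x := u 1%N in huv hu1 *; set y := v 1%N in huv hv1 *.
have Dpos : forall z, (D1 <= z)%N -> 0 < f z.+1 - f z.
  move=> z hz; have := hD1 (z - D1)%N; rewrite subnK //; lia.
have mono : forall e, f y <= f (y + e)%N.
  elim=> [|e ih]; first by rewrite addn0.
  have := Dpos (y + e)%N ltac:(lia); rewrite addnS; lia.
have F1 : f x - f y >= f x - f x.-1.
  have := mono (x.-1 - y)%N; rewrite subnKC; [lia | lia].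
have F2 : (2 ^ t * r (x - Delta + Ls)%N)%N%:Z < f x - f x.-1.
  have := hD1 (x.-1 - D1)%N; rewrite subnK; last by lia.
  rewrite prednK; last by lia.
  move=> h; apply: le_lt_trans h; rewrite lez_nat.
  rewrite (_ : (x.-1 - D1 = x.-1 - D1 - t * j0 + t * j0)%N); last by lia.
  apply: leq_trans (pg t (x.-1 - D1 - t * j0)%N).
  rewrite leq_mul2l; apply/orP; right; apply: r_mono; lia.
have F4 : (2 * (m * (Ms * r (x - Delta + Ls)%N)) <= 2 ^ t * r (x - Delta + Ls)%N)%N.
  rewrite mulnA mulnA; apply: leq_mul => //; apply: ltnW; exact: ltn_expl.
have F5 : (m * (Ms * r (y - Delta + Ls)%N) <= m * (Ms * r (x - Delta + Ls)%N))%N.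
  apply: leq_mul => //; apply: leq_mul => //; apply: r_mono; lia.
have Tu := Tb u hu; have Tv := Tb v hv.
rewrite /dotop !(big_ltn (hm : (1 < m.+1)%N)) -/x -/y.
move: Tu Tv F1 F2 F4 F5; rewrite -/x -/y -/f /f.
set Tu := \sum_(2 <= i < m.+1) _. set Tv := \sum_(2 <= i < m.+1) _.
rewrite !ler_norml.
set R1 := r (x - Delta + Ls)%N. set R2 := r (y - Delta + Ls)%N.
move=> /andP[a1 a2] /andP[b1 b2] c1 c2 c3 c4.
have c3' := c3 : ((2 * (m * (Ms * R1)))%N%:Z <= (2 ^ t * R1)%N%:Z).
have c4' := c4 : ((m * (Ms * R2))%N%:Z <= (m * (Ms * R1))%N%:Z).
lia.
Qed.

End S.

Lemma opapp_opp r L k : opapp r (map (fun x => - x) L) k = - opapp r L k.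
Proof.
rewrite /opapp size_map -sumrN; apply: eq_bigr => i _.
by rewrite (nth_map 0) ?ltn_ord // mulNr.
Qed.

Lemma dot_split r A n' z : dotop r n'.+1 A z =
  opapp r (A 1%N) (z 1%N) + dotop r n' (fun i => A i.+1) (fun i => z i.+1).
Proof. by rewrite /dotop big_nat_recl. Qed.

Lemma dot_ext r m C w1 w2 : (forall i, (1 <= i <= m)%N -> w1 i = w2 i) ->
  dotop r m C w1 = dotop r m C w2.
Proof. move=> h; rewrite /dotop; apply: eq_big_nat => i hi; by rewrite h. Qed.

Lemma tail_valid r N d Delta n' z : inRtDelta r N d Delta n'.+1 z ->
  inRtDelta r N d Delta n' (fun i => z i.+1).
Proof.
move=> h i /andP[h1 h2]; have := h i.+1 ltac:(lia). by rewrite eqSS.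
Qed.

Lemma comb_valid r (hr : strictly_incr r) N d Delta n' k1 w : (1 <= n')%N ->
  inTilde N d k1 -> inRtDelta r N d Delta n' w -> (w 1%N + Delta <= k1)%N ->
  inRtDelta r N d Delta n'.+1 (fun i => if (i <= 1)%N then k1 else w i.-1).
Proof.
move=> hn hk hw hle i /andP[h1 h2].
case: (ltngtP i 1) => [|hi|e]; first lia.
- have [hi1 hi2] : (1 <= i.-1)%N /\ (i.-1 <= n')%N by lia.
  have := hw i.-1 (introT andP (conj hi1 hi2)).
  rewrite /=.
  have -> : (i == n'.+1) = (i.-1 == n') by apply/eqP/eqP; lia.
  by rewrite prednK //; lia.
- subst i; split=> //=.
  rewrite (_ : (1 == n'.+1) = false); last by apply/eqP; lia.
  exact: r_mono.
Qed.

Theorem mainTheorem19 (r : nat -> nat) (hr : strictly_incr r)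
  (hsp : sparse r) (hcp : congr_periodic r)
  (d : nat) (hd : (0 < d)%N) (N : nat)
  (n : nat) (hn : (2 <= n)%N) (A : nat -> seq int)
  (hA : forall i, (1 <= i <= n)%N -> ~ zeroR r (A i)) :
  exists Delta0 : nat, forall Delta : nat, (Delta0 <= Delta)%N -> (d %| Delta)%N ->
  forall a : int,
    (exists w, inRtDelta r N d Delta n w /\ dotop r n A w < a) ->
    forall k : nat -> nat, IsP r N d Delta n a A k ->
    (exists w, inRtDelta r N d Delta n w /\ w 1%N = k 1%N /\ a <= dotop r n A w) ->
    IsP r N d Delta n.-1 (a - opapp r (A 1%N) (k 1%N))
        (fun i => A i.+1) (fun i => k i.+1).
Proof.
case: n hn hA => // n' hn hA; have hn' : (1 <= n')%N by lia.
set B := fun i => A i.+1.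
have key : exists Delta0,
   (forall Delta, (Delta0 <= Delta)%N -> forall u v,
    inRtDelta r N d Delta n' u -> inRtDelta r N d Delta n' v -> (v 1 < u 1)%N ->
    dotop r n' B v < dotop r n' B u) \/
   (forall Delta, (Delta0 <= Delta)%N -> forall u v,
    inRtDelta r N d Delta n' u -> inRtDelta r N d Delta n' v -> (v 1 < u 1)%N ->
    dotop r n' B u < dotop r n' B v).
  have [[z|[p|[K q]]] _] := hsp (A 2%N).
  - by case: (hA 2%N ltac:(lia)).
  - have [D0 hD0] := dominance r hr hsp B n' hn' p.
    exists D0; left => D hD u v; exact: hD0 D hD N d u v.
  - set B' := fun i => map (fun x => - x) (B i).
    have hdot : forall w, dotop r n' B' w = - dotop r n' B w.
      move=> w; rewrite /dotop -sumrN; apply: eq_bigr => i _; exact: opapp_opp.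
    have p' : exists K, forall k, (K <= k)%N -> 0 < opapp r (B' 1%N) k.
      by exists K => k hk; rewrite opapp_opp oppr_gt0 q.
    have [D0 hD0] := dominance r hr hsp B' n' hn' p'.
    exists D0; right => Delta hD u v hu hv huv.
    have := hD0 Delta hD N d u v hu hv huv; rewrite !hdot; lia.
have [D0 hkey] := key.
exists D0 => Delta hD _ a [w0 [hw0 hlt0]] k [hk [hex _]] [w [hw [hw1 hge]]].
have [hka hmax] := hex (ex_intro _ w0 (conj hw0 hlt0)).
have hk' := tail_valid r N d Delta n' k hk.
rewrite dot_split -/B in hka.
have hlt' : dotop r n' B (fun i => k i.+1) < a - opapp r (A 1%N) (k 1%N) by lia.
have -> : n'.+1.-1 = n' by [].
split; first exact: hk'.
split; last by move=> hne; exfalso; apply: hne; exists (fun i => k i.+1).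
move=> _; split; first exact: hlt'.
move=> u hu hlu.
have hk1 : inTilde N d (k 1%N) by have [] := hk 1%N ltac:(lia).
have hk2 := tup_step r hr N d Delta n'.+1 k hk 1 (leqnn 1) ltac:(lia).
case: (leqP (u 1%N + Delta) (k 1%N)) => hc.
- have hz := comb_valid r hr N d Delta n' (k 1%N) u hn' hk1 hu hc.
  have hzd : dotop r n'.+1 A (fun i => if (i <= 1)%N then k 1%N else u i.-1) =
     opapp r (A 1%N) (k 1%N) + dotop r n' B u.
    rewrite dot_split /=; congr (_ + _); apply: dot_ext => i /andP[h1 _].
    by rewrite ltnNge h1.
  have := hmax _ hz; rewrite hzd dot_split -/B => h; have := h ltac:(lia); lia.
- have hw' := tail_valid r N d Delta n' w hw.
  have hw2 := tup_step r hr N d Delta n'.+1 w hw 1 (leqnn 1) ltac:(lia).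
  case: hkey => hkey.
  + have := hkey Delta hD u (fun i => w i.+1) hu hw' ltac:(lia).
    move: hge; rewrite dot_split -/B hw1 => hge h; exfalso.
    have : dotop r n' B u < a - opapp r (A 1%N) (k 1%N) := hlu. lia.
  + have := hkey Delta hD u (fun i => k i.+1) hu hk' ltac:(lia).
    move=> h; exact: ltW.
Qed.
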